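(* Let $f(\xi) = i e^{\xi}$ on $U=\{\xi\in\mathbb{C} : |\operatorname{Im}\xi|<\pi/2\}$. Then the domain of the Burgers transform of $f$ is $\Omega_f = \mathbb{R}^2$. Moreover, with $\lambda=\mathcal{B}[f]$, $w_0=y-\lambda x$ and $J(x,y) = 1 + f'(w_0)\,x$, one has $|J(x,y)| \geq 1$ for all $(x,y) \in \mathbb{R}^2$, with equality only at $x = 0$.
   Context: $\mathbb{C}_+$ is the upper half-plane; $f$ maps $U$ into $\mathbb{C}_+$. The Burgers transform $\mathcal{B}[f]\colon\Omega_f\to\mathbb{C}_+$ is defined implicitly by $\mathcal{B}[f](x,y) = f(y - \mathcal{B}[f](x,y)\, x)$, where $\Omega_f \subseteq \mathbb{R}^2$ is the maximal open set on which this equation admits a unique $C^1$ solution with positive imaginary part. (Explicitly, $\mathcal{B}[f](x,y) = W_0(ixe^y)/x$ for $x\ne0$, with $W_0$ the principal branch of the Lambert $W$ function, and $\mathcal{B}[f](0,y)=ie^y$.) *)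

(* Defs.v *)
From Stdlib Require Import Reals.
From Coquelicot Require Import Coquelicot.
Open Scope R_scope.

Definition Cexp (z : C) : C := (exp (Re z) * cos (Im z), exp (Re z) * sin (Im z)).

Definition stripU (z : C) : Prop := Rabs (Im z) < PI / 2.

Definition fB (z : C) : C := (Ci * Cexp z)%C.

(* its (complex) derivative, f'(xi) = i e^xi; the theorem also asserts this *)
Definition fprime (z : C) : C := (Ci * Cexp z)%C.

Definition C1_on (V : R * R -> Prop) (g : R * R -> C) : Prop :=
  exists gx gy : R * R -> C,
    forall p, V p ->
      is_derive (fun t : R => g (t, snd p)) (fst p) (gx p) /\
      is_derive (fun t : R => g (fst p, t)) (snd p) (gy p) /\
      continuous gx p /\ continuous gy p.

Definition burgers_sol (V : R * R -> Prop) (lam : R * R -> C) : Prop :=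
  C1_on V lam /\
  forall x y, V (x, y) ->
    0 < Im (lam (x, y)) /\
    stripU (RtoC y - lam (x, y) * RtoC x)%C /\
    lam (x, y) = fB (RtoC y - lam (x, y) * RtoC x)%C.

Definition burgers_admissible (V : R * R -> Prop) : Prop :=
  open V /\ (exists lam, burgers_sol V lam) /\
  (forall l1 l2, burgers_sol V l1 -> burgers_sol V l2 ->
     forall p, V p -> l1 p = l2 p).

(* Omega_f : the maximal such open set (union of all admissible open sets) *)
Definition Omega_f (p : R * R) : Prop :=
  exists V, burgers_admissible V /\ V p.

(* Main.v *)
Require Import Defs.
From Stdlib Require Import Reals Lra.
From Coquelicot Require Import Coquelicot.
Open Scope R_scope.

Definition inS (e : R) := - (PI / 2) < e < PI / 2.
Definition Xi (e:R) := e * sin e / cos e.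
Definition Xid (e:R) := sin e / cos e + e / (cos e)^2.
Definition gg (e:R) := e * exp (Xi e) / cos e.
Definition gd (e:R) := exp (Xi e) / cos e * (1 + 2 * Xi e + (e / cos e)^2).

Lemma cos_inS e : inS e -> 0 < cos e.
Proof. intros [h1 h2]; apply cos_gt_0; lra. Qed.

Lemma esin_ge0 e : inS e -> 0 <= e * sin e.
Proof.
  intros [h1 h2]. destruct (Rle_lt_dec 0 e).
  - apply Rmult_le_pos; auto. apply sin_ge_0; lra.
  - replace (e * sin e) with ((-e) * sin (- e)) by (rewrite sin_neg; ring).
    apply Rmult_le_pos; try lra. apply sin_ge_0; lra.
Qed.

Lemma Xi_ge0 e : inS e -> 0 <= Xi e.
Proof.
  intros h. unfold Xi. pose proof (cos_inS e h). pose proof (esin_ge0 e h).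
  unfold Rdiv. apply Rmult_le_pos; auto. left; apply Rinv_0_lt_compat; auto.
Qed.

Lemma is_derive_Xi e : inS e -> is_derive Xi e (Xid e).
Proof.
  intros h. pose proof (cos_inS e h) as hc. unfold Xi, Xid.
  auto_derive. lra.
  pose proof (sin2_cos2 e) as hs. unfold Rsqr in hs. assert (hs2: sin e ^2 = 1 - cos e ^2) by nra.
  field_simplify; try lra. rewrite hs2. unfold Rdiv. ring.
Qed.

Lemma is_derive_gg e : inS e -> is_derive gg e (gd e).
Proof.
  intros h. pose proof (cos_inS e h) as hc. 
  apply (is_derive_ext (fun e => e * exp (e * sin e / cos e) / cos e)). reflexivity.
  auto_derive. lra. unfold gd, Xi.
  pose proof (sin2_cos2 e) as hs. unfold Rsqr in hs. assert (hs2: sin e ^2 = 1 - cos e ^2) by nra.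
  field_simplify; try lra. rewrite hs2. unfold Rdiv. ring.
Qed.

Lemma gd_pos e : inS e -> 0 < gd e.
Proof.
  intros h. pose proof (cos_inS e h). pose proof (Xi_ge0 e h). unfold gd.
  apply Rmult_lt_0_compat.
  - unfold Rdiv. apply Rmult_lt_0_compat. apply exp_pos. apply Rinv_0_lt_compat; auto.
  - pose proof (pow2_ge_0 (e / cos e)). lra.
Qed.

Lemma gg_incr x y : inS x -> inS y -> x < y -> gg x < gg y.
Proof.
  intros [hx1 hx2] [hy1 hy2] hxy.
  apply (incr_function gg (Finite (- (PI/2))) (Finite (PI/2)) gd); simpl; auto.
  - intros z h1 h2. apply is_derive_gg. split; auto.
  - intros z h1 h2. apply gd_pos. split; auto.
Qed.

Lemma gg_le x y : inS x -> inS y -> gg x <= gg y -> x <= y.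
Proof.
  intros hx hy h. destruct (Rle_lt_dec x y); auto.
  pose proof (gg_incr y x hy hx r). lra.
Qed.

Lemma gg_inj x y : inS x -> inS y -> gg x = gg y -> x = y.
Proof.
  intros hx hy h. apply Rle_antisym; apply gg_le; auto; lra.
Qed.

Lemma gg_odd e : gg (- e) = - gg e.
Proof. unfold gg, Xi. rewrite sin_neg, cos_neg. unfold Rdiv.
  replace (- e * - sin e) with (e * sin e) by ring. ring. Qed.

Lemma gg_big M : 0 <= M -> exists a, inS a /\ 0 < a /\ M < gg a.
Proof.
  intros hM. set (d := / (M + 2)).
  assert (hd : 0 < d) by (unfold d; apply Rinv_0_lt_compat; lra).
  assert (hd2 : d <= / 2) by (unfold d; apply Rinv_le_contravar; lra).
  pose proof PI2_3_2.
  set (a := PI/2 - d). exists a.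
  assert (ha : inS a) by (unfold inS, a; lra).
  split; auto. split. unfold a; lra.
  pose proof (cos_inS a ha) as hc.
  assert (hca : cos a < d).
  { unfold a. rewrite cos_shift. apply sin_lt_x; auto. }
  assert (he : 1 <= exp (Xi a)).
  { pose proof (exp_ineq1_le (Xi a)). pose proof (Xi_ge0 a ha). lra. }
  assert (h1 : 1 <= a) by (unfold a; lra).
  unfold gg.
  assert (/ d = M + 2) by (unfold d; rewrite Rinv_inv; auto).
  assert (/ d < / cos a) by (apply Rinv_lt_contravar; auto; nra).
  assert (1 / cos a <= a * exp (Xi a) / cos a).
  { unfold Rdiv. apply Rmult_le_compat_r. left; apply Rinv_0_lt_compat; auto. nra. }
  lra.
Qed.

Lemma cont_pt_of_derive f x l : is_derive f x l -> continuity_pt f x.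
Proof.
  intros h. apply continuity_pt_filterlim. apply (ex_derive_continuous f x).
  exists l; exact h.
Qed.

Lemma ex_H t : exists e, inS e /\ gg e = t.
Proof.
  destruct (gg_big (Rabs t) (Rabs_pos t)) as [a [ha [ha0 hg]]].
  assert (hb : Rabs t < gg a) by exact hg.
  destruct (Ranalysis5.IVT_interv (fun e => gg e - t) (-a) a) as [z [hz1 hz2]].
  - intros b hb'. apply continuity_pt_minus. 
    apply (cont_pt_of_derive gg b (gd b)). apply is_derive_gg. destruct ha; split; lra.
    apply continuity_pt_const. intros u v; reflexivity.
  - lra.
  - rewrite gg_odd. pose proof (Rle_abs t). pose proof (Rle_abs (-t)). rewrite Rabs_Ropp in *. lra.
  - pose proof (Rle_abs t). lra.
  - exists z. split. destruct ha; split; lra. lra.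
Qed.

From Stdlib Require Import ClassicalEpsilon.

Definition H (t : R) : R := proj1_sig (constructive_indefinite_description _ (ex_H t)).

Lemma H_spec t : inS (H t) /\ gg (H t) = t.
Proof. unfold H. destruct (constructive_indefinite_description _ (ex_H t)) as [e he]. exact he. Qed.

Lemma H_unique t e : inS e -> gg e = t -> H t = e.
Proof. intros h1 h2. destruct (H_spec t). apply gg_inj; auto; congruence. Qed.

Lemma H_incr s t : s < t -> H s < H t.
Proof.
  intros h. destruct (H_spec s) as [a1 a2]. destruct (H_spec t) as [b1 b2].
  destruct (Rlt_le_dec (H s) (H t)); auto.
  destruct r as [r|r].
  - pose proof (gg_incr _ _ b1 a1 r). lra.
  - rewrite <- r in a2. lra.
Qed.

Lemma H_le s t : s <= t -> H s <= H t.
Proof. intros [h|h]. left; apply H_incr; auto. subst; lra. Qed.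

Lemma inS_between a b c : inS a -> inS c -> a <= b <= c -> inS b.
Proof. unfold inS; lra. Qed.

Definition hd (t : R) : R := / gd (H t).

Lemma is_derive_H t : is_derive H t (hd t).
Proof.
  set (lb := t - 1). set (ub := t + 1).
  destruct (H_spec lb) as [sl gl]. destruct (H_spec ub) as [su gu].
  destruct (H_spec t) as [st gt].
  assert (hlu : H lb < H ub) by (apply H_incr; unfold lb, ub; lra).
  assert (Prf : forall a, H lb <= a <= H ub -> derivable_pt gg a).
  { intros a ha. exists (gd a). apply is_derive_Reals. apply is_derive_gg.
    apply (inS_between (H lb) a (H ub)); auto. }
  assert (hcont : continuity_pt H t).
  { apply (Ranalysis5.continuity_pt_recip_interv gg H (H lb) (H ub)); auto.
    - intros x y h1 h2 h3. apply gg_incr; auto.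
      apply (inS_between (H lb) x (H ub)); auto; lra.
      apply (inS_between (H lb) y (H ub)); auto; lra.
    - intros x _ _. unfold comp, id. apply (H_spec x).
    - intros x h1 h2. rewrite gl, gu in *. split; apply H_le; auto.
    - intros a ha. apply (cont_pt_of_derive gg a (gd a)). apply is_derive_gg.
      apply (inS_between (H lb) a (H ub)); auto.
    - rewrite gl, gu. unfold lb, ub; lra. }
  assert (Hi : H lb <= H t <= H ub) by (split; apply H_le; unfold lb, ub; lra).
  pose proof (Ranalysis5.derivable_pt_lim_recip_interv gg H lb ub t Prf hcont) as D.
  assert (E : derive_pt gg (H t) (Prf (H t) Hi) = gd (H t)).
  { apply derive_pt_eq_0. apply is_derive_Reals. apply is_derive_gg; auto. }
  apply is_derive_Reals.
  replace (hd t) with (1 / derive_pt gg (H t) (Prf (H t) Hi)).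
  apply D; unfold lb, ub; try lra.
  - intros x _. unfold comp, id. apply (H_spec x).
  - rewrite E. pose proof (gd_pos _ st). lra.
  - rewrite E. unfold hd. field. pose proof (gd_pos _ st). lra.
Qed.

Lemma cont_of_derive (f : R -> R) x l : is_derive f x l -> continuous f x.
Proof. intros h. apply continuity_pt_filterlim. apply (cont_pt_of_derive f x l h). Qed.

Lemma cont_H t : continuous H t.
Proof. apply (cont_of_derive _ _ _ (is_derive_H t)). Qed.

Lemma cont_1d_comp (F : R -> R) t : (forall e, inS e -> ex_derive F e) -> continuous (fun t => F (H t)) t.
Proof.
  intros hF. apply (continuous_comp H F). apply cont_H.
  destruct (hF (H t) (proj1 (H_spec t))) as [l hl]. apply (cont_of_derive F _ l hl).
Qed.

Definition fXi t := Xi (H t).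
Definition fXid t := Xid (H t).
Definition fsin t := sin (H t).
Definition fcos t := cos (H t).

Lemma cont_fXi t : continuous fXi t.
Proof. apply cont_1d_comp. intros e he. pose proof (cos_inS e he). unfold Xi. auto_derive. lra. Qed.
Lemma cont_fXid t : continuous fXid t.
Proof. apply cont_1d_comp. intros e he. pose proof (cos_inS e he). unfold Xid. auto_derive. repeat split; try lra; intro; nra. Qed.
Lemma cont_fsin t : continuous fsin t.
Proof. apply cont_1d_comp. intros e he. auto_derive. auto. Qed.
Lemma cont_fcos t : continuous fcos t.
Proof. apply cont_1d_comp. intros e he. auto_derive. auto. Qed.
Definition gd' e := Derive gd e.
Lemma is_derive_gd e : inS e -> is_derive gd e (gd' e).
Proof. intros he. pose proof (cos_inS e he). unfold gd'. apply Derive_correct.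
  unfold gd, Xi. auto_derive. repeat split; try lra. Qed.

Lemma cont_hd t : continuous hd t.
Proof. apply (cont_1d_comp (fun e => / gd e)). intros e he. pose proof (cos_inS e he).
  pose proof (gd_pos e he). exists (- (gd' e) / gd e ^2). apply is_derive_inv. apply is_derive_gd; auto. lra. Qed.
Lemma cont_exp t : continuous exp t.
Proof. apply (cont_of_derive _ _ (exp t)). auto_derive. auto. ring. Qed.

Lemma pairC_eq (a b : R) : ((a, b) : C) = plus (scal a ((1,0):C)) (scal b ((0,1):C)).
Proof. apply injective_projections; simpl; unfold plus, scal; simpl;
  unfold prod_plus, prod_scal; simpl; unfold plus, scal, mult; simpl; unfold mult; simpl; ring. Qed.

Lemma is_derive_pairC (f g : R -> R) x a b :
  is_derive f x a -> is_derive g x b ->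
  is_derive (fun t => ((f t, g t) : C)) x ((a, b) : C).
Proof.
  intros hf hg. rewrite pairC_eq.
  apply (is_derive_ext (fun t => plus (scal (f t) ((1,0):C)) (scal (g t) ((0,1):C)))).
  intros t. symmetry. apply pairC_eq.
  apply (is_derive_plus (K:=R_AbsRing) (V:=C_R_NormedModule)); apply (is_derive_scal_l (K:=R_AbsRing) (V:=C_R_NormedModule)); auto.
Qed.

Lemma cont_pairC (f g : R * R -> R) p :
  continuous f p -> continuous g p -> continuous (fun q => ((f q, g q) : C)) p.
Proof.
  intros hf hg.
  apply (continuous_ext (fun q => plus (scal (f q) ((1,0):C)) (scal (g q) ((0,1):C)))).
  intros t. symmetry. apply pairC_eq.
  apply (continuous_plus (K:=R_AbsRing) (V:=C_R_NormedModule)); apply (continuous_scal_l (K:=R_AbsRing) (V:=C_R_NormedModule)); auto.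
Qed.

Section Cont2.
Variable p : R * R.
Lemma c2plus (f g : R * R -> R) : continuous f p -> continuous g p -> continuous (fun q => f q + g q) p.
Proof. intros; apply (continuous_plus (K:=R_AbsRing) (V:=R_NormedModule) f g); auto. Qed.
Lemma c2mult (f g : R * R -> R) : continuous f p -> continuous g p -> continuous (fun q => f q * g q) p.
Proof. intros; apply (continuous_mult (K:=R_AbsRing) f g); auto. Qed.
Lemma c2opp (f : R * R -> R) : continuous f p -> continuous (fun q => - f q) p.
Proof. intros; apply (continuous_opp (K:=R_AbsRing) (V:=R_NormedModule) f); auto. Qed.
Lemma c2minus (f g : R * R -> R) : continuous f p -> continuous g p -> continuous (fun q => f q - g q) p.
Proof. intros; apply c2plus; auto; apply c2opp; auto. Qed.
Lemma c2comp (f : R * R -> R) (F : R -> R) : continuous f p -> (forall t, continuous F t) -> continuous (fun q => F (f q)) p.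
Proof. intros; apply (continuous_comp f F); auto. Qed.
Lemma c2exp f : continuous f p -> continuous (fun q => exp (f q)) p.
Proof. intros; apply c2comp; auto; apply cont_exp. Qed.
Lemma c2fXi f : continuous f p -> continuous (fun q => fXi (f q)) p.
Proof. intros; apply c2comp; auto; apply cont_fXi. Qed.
Lemma c2fXid f : continuous f p -> continuous (fun q => fXid (f q)) p.
Proof. intros; apply c2comp; auto; apply cont_fXid. Qed.
Lemma c2fsin f : continuous f p -> continuous (fun q => fsin (f q)) p.
Proof. intros; apply c2comp; auto; apply cont_fsin. Qed.
Lemma c2fcos f : continuous f p -> continuous (fun q => fcos (f q)) p.
Proof. intros; apply c2comp; auto; apply cont_fcos. Qed.
Lemma c2hd f : continuous f p -> continuous (fun q => hd (f q)) p.
Proof. intros; apply c2comp; auto; apply cont_hd. Qed.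
Lemma c2fst : continuous (fun q : R * R => fst q) p.
Proof. destruct p; apply continuous_fst. Qed.
Lemma c2snd : continuous (fun q : R * R => snd q) p.
Proof. destruct p; apply continuous_snd. Qed.
Lemma c2const (c : R) : continuous (fun q : R * R => c) p.
Proof. apply continuous_const. Qed.
End Cont2.

Ltac cont1 :=
  match goal with
  | |- continuous (fun q => _ + _) _ => apply c2plus
  | |- continuous (fun q => _ - _) _ => apply c2minus
  | |- continuous (fun q => _ * _) _ => apply c2mult
  | |- continuous (fun q => - _) _ => apply c2opp
  | |- continuous (fun q => fst q) _ => apply c2fst
  | |- continuous fst _ => apply c2fst
  | |- continuous snd _ => apply c2snd
  | |- continuous (fun q => snd q) _ => apply c2snd
  | |- continuous (fun q => exp _) _ => apply c2exp
  | |- continuous (fun q => fXi _) _ => apply c2fXi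
  | |- continuous (fun q => fXid _) _ => apply c2fXid
  | |- continuous (fun q => fsin _) _ => apply c2fsin
  | |- continuous (fun q => fcos _) _ => apply c2fcos
  | |- continuous (fun q => hd _) _ => apply c2hd
  | |- continuous (fun q => _) _ => apply c2const
  end.
Ltac cont := repeat cont1.

Definition T (p : R * R) := fst p * exp (snd p).
Definition lamR p := exp (snd p - fXi (T p)) * fsin (T p).
Definition lamI p := exp (snd p - fXi (T p)) * fcos (T p).
Definition lam0 p : C := (lamR p, lamI p).

Definition dLR p c1 c2 :=
  exp (snd p - fXi (T p)) * (c1 - fXid (T p) * hd (T p) * c2) * fsin (T p)
  + exp (snd p - fXi (T p)) * fcos (T p) * hd (T p) * c2.
Definition dLI p c1 c2 :=
  exp (snd p - fXi (T p)) * (c1 - fXid (T p) * hd (T p) * c2) * fcos (T p)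
  - exp (snd p - fXi (T p)) * fsin (T p) * hd (T p) * c2.

Definition gx p : C := (dLR p 0 (exp (snd p)), dLI p 0 (exp (snd p))).
Definition gy p : C := (dLR p 1 (T p), dLI p 1 (T p)).

Lemma cont_gx p : continuous gx p.
Proof. apply cont_pairC; unfold dLR, dLI, T; cont. Qed.
Lemma cont_gy p : continuous gy p.
Proof. apply cont_pairC; unfold dLR, dLI, T; cont. Qed.

Lemma is_derive_fXi t : is_derive fXi t (hd t * fXid t).
Proof.
  unfold fXi, fXid. apply (is_derive_comp Xi H t (Xid (H t)) (hd t)).
  apply is_derive_Xi, H_spec. apply is_derive_H.
Qed.
Lemma is_derive_fsin t : is_derive fsin t (hd t * fcos t).
Proof.
  unfold fsin, fcos. apply (is_derive_comp sin H t (cos (H t)) (hd t)).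
  auto_derive; auto; ring. apply is_derive_H.
Qed.
Lemma is_derive_fcos t : is_derive fcos t (hd t * - fsin t).
Proof.
  unfold fsin, fcos. apply (is_derive_comp cos H t (- sin (H t)) (hd t)).
  auto_derive; auto; ring. apply is_derive_H.
Qed.

Ltac rwD := 
  rewrite ?(is_derive_unique fXi _ _ (is_derive_fXi _)),
          ?(is_derive_unique fsin _ _ (is_derive_fsin _)),
          ?(is_derive_unique fcos _ _ (is_derive_fcos _)).

Lemma exd_fXi t : ex_derive fXi t. Proof. eexists; apply is_derive_fXi. Qed.
Lemma exd_fsin t : ex_derive fsin t. Proof. eexists; apply is_derive_fsin. Qed.
Lemma exd_fcos t : ex_derive fcos t. Proof. eexists; apply is_derive_fcos. Qed.

Lemma dx_lam x y : is_derive (fun s => lam0 (s, y)) x (gx (x, y)).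
Proof.
  unfold lam0, gx. apply is_derive_pairC.
  - unfold lamR, dLR, T; simpl. auto_derive.
    + repeat split; first [apply exd_fXi | apply exd_fsin].
    + rwD. unfold Rminus. ring.
  - unfold lamI, dLI, T; simpl. auto_derive.
    + repeat split; first [apply exd_fXi | apply exd_fcos].
    + rwD. unfold Rminus. ring.
Qed.

Lemma dy_lam x y : is_derive (fun s => lam0 (x, s)) y (gy (x, y)).
Proof.
  unfold lam0, gy. apply is_derive_pairC.
  - unfold lamR, dLR, T; simpl. auto_derive.
    + repeat split; first [apply exd_fXi | apply exd_fsin].
    + rwD. unfold Rminus. ring.
  - unfold lamI, dLI, T; simpl. auto_derive.
    + repeat split; first [apply exd_fXi | apply exd_fcos].
    + rwD. unfold Rminus. ring.
Qed.

Lemma key x y : exp (y - fXi (x * exp y)) * x = H (x * exp y) / cos (H (x * exp y)).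
Proof.
  unfold fXi. destruct (H_spec (x * exp y)) as [hs hg]. set (e := H (x * exp y)) in *.
  pose proof (cos_inS e hs) as hc. unfold gg in hg.
  rewrite Rminus_def, exp_plus, exp_Ropp.
  pose proof (exp_pos (Xi e)). pose proof (exp_pos y).
  apply (Rmult_eq_reg_r (exp (Xi e) * cos e)); [| apply Rgt_not_eq; apply Rmult_lt_0_compat; auto].
  replace (e / cos e * (exp (Xi e) * cos e)) with (e * exp (Xi e) / cos e * cos e) by (field; lra).
  rewrite hg. field. lra.
Qed.

Lemma lamI_x x y : lamI (x, y) * x = H (x * exp y).
Proof.
  unfold lamI, T, fcos; simpl. pose proof (key x y).
  destruct (H_spec (x * exp y)) as [hs _]. pose proof (cos_inS _ hs).
  replace (exp (y - fXi (x * exp y)) * cos (H (x * exp y)) * x) with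
    (exp (y - fXi (x * exp y)) * x * cos (H (x * exp y))) by ring.
  rewrite H0. field. lra.
Qed.

Lemma lamR_x x y : lamR (x, y) * x = Xi (H (x * exp y)).
Proof.
  unfold lamR, T, fsin; simpl. pose proof (key x y).
  destruct (H_spec (x * exp y)) as [hs _]. pose proof (cos_inS _ hs).
  replace (exp (y - fXi (x * exp y)) * sin (H (x * exp y)) * x) with
    (exp (y - fXi (x * exp y)) * x * sin (H (x * exp y))) by ring.
  rewrite H0. unfold Xi. field. lra.
Qed.

Lemma lam0_sol x y :
  0 < Im (lam0 (x, y)) /\
  stripU (RtoC y - lam0 (x, y) * RtoC x)%C /\
  lam0 (x, y) = fB (RtoC y - lam0 (x, y) * RtoC x)%C.
Proof.
  pose proof (lamI_x x y) as hI. pose proof (lamR_x x y) as hR.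
  destruct (H_spec (x * exp y)) as [hs _]. pose proof (cos_inS _ hs).
  split; [| split].
  - unfold lam0, Im; simpl. unfold lamI. apply Rmult_lt_0_compat. apply exp_pos. exact H0.
  - unfold stripU, lam0. simpl.
    replace (0 + - (lamR (x, y) * 0 + lamI (x, y) * x)) with (- H (x * exp y)) by (rewrite <- hI; ring).
    rewrite Rabs_Ropp. unfold inS in hs. apply Rabs_def1; lra.
  - unfold lam0, fB, Cexp. simpl.
    replace (0 + - (lamR (x, y) * 0 + lamI (x, y) * x)) with (- H (x * exp y)) by (rewrite <- hI; ring).
    replace (y + - (lamR (x, y) * x - lamI (x, y) * 0)) with (y - Xi (H (x * exp y))) by (rewrite <- hR; ring).
    rewrite cos_neg, sin_neg. unfold Ci, Cmult. simpl.
    apply injective_projections; simpl; unfold lamR, lamI, T, fsin, fcos, fXi; simpl; ring.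
Qed.

Lemma sol_unique (L : C) x y :
  stripU (RtoC y - L * RtoC x)%C -> L = fB (RtoC y - L * RtoC x)%C ->
  L = lam0 (x, y) /\ fst L * x = Xi (H (x * exp y)) /\ snd L * x = H (x * exp y).
Proof.
  destruct L as [a b]. intros hs heq.
  unfold stripU in hs. simpl in hs.
  unfold fB, Cexp, Ci, Cmult in heq. simpl in heq.
  pose proof (f_equal fst heq) as ha. pose proof (f_equal snd heq) as hb. simpl in ha, hb.
  clear heq.
  replace (0 + - (a * 0 + b * x)) with (- (b * x)) in * by ring.
  replace (y + - (a * x - b * 0)) with (y - a * x) in * by ring.
  rewrite cos_neg, sin_neg in *. rewrite Rabs_Ropp in hs.
  remember (exp (y - a * x)) as E eqn:HE.
  remember (b * x) as et eqn:Het.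
  assert (hS : inS et) by (unfold inS; apply Rabs_def2 in hs; lra).
  pose proof (cos_inS et hS) as hc.
  assert (ha' : a = E * sin et) by lra.
  assert (hb' : b = E * cos et) by lra.
  assert (hxi : a * x = Xi et).
  { unfold Xi. apply (Rmult_eq_reg_r (cos et)); [| lra].
    replace (et * sin et / cos et * cos et) with (et * sin et) by (field; lra).
    assert (het2 : et = E * cos et * x) by (rewrite <- hb'; exact Het). rewrite ha'. rewrite het2 at 3. ring. }
  assert (hE : E * exp (a * x) = exp y).
  { rewrite HE. rewrite <- exp_plus. f_equal. ring. }
  assert (hg : gg et = x * exp y).
  { unfold gg. rewrite <- hxi. rewrite <- hE. rewrite Het at 1. rewrite hb'. field. lra. }
  pose proof (H_unique _ _ hS hg) as hH.
  split; [| split].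
  - unfold lam0, lamR, lamI, T, fXi, fsin, fcos. simpl. rewrite hH, <- hxi. rewrite <- HE.
    f_equal; lra.
  - simpl. rewrite hH. exact hxi.
  - simpl. rewrite hH. auto.
Qed.
Lemma deriv_small (f : R -> R) l : is_derive f 0 l ->
  forall e, 0 < e -> exists d, 0 < d /\ forall u, Rabs u < d -> Rabs (f u - f 0 - l * u) <= e * Rabs u.
Proof.
  intros hf e he. apply is_derive_Reals in hf.
  destruct (hf e he) as [d hd]. exists d. split. apply cond_pos.
  intros u hu. destruct (Req_dec u 0) as [->|hu0].
  - rewrite Rmult_0_r, Rminus_0_r, Rminus_diag, Rabs_R0, Rmult_0_r. lra.
  - specialize (hd u hu0 hu). rewrite Rplus_0_l in hd.
    replace (f u - f 0 - l * u) with (((f u - f 0) / u - l) * u) by (field; auto).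
    rewrite Rabs_mult. apply Rmult_le_compat_r. apply Rabs_pos. lra.
Qed.

Lemma Cmod_le_sum a b : Cmod (a,b) <= Rabs a + Rabs b.
Proof.
  unfold Cmod; simpl. pose proof (Rabs_pos a). pose proof (Rabs_pos b).
  rewrite <- (sqrt_pow2 (Rabs a + Rabs b)) by lra. apply sqrt_le_1_alt.
  pose proof (pow2_abs a). pose proof (pow2_abs b). simpl in *. nra.
Qed.

Lemma Cmod_fst a b : Rabs a <= Cmod (a,b).
Proof. pose proof (Rmax_Cmod (a,b)) as HH. simpl in HH. pose proof (Rmax_l (Rabs a) (Rabs b)). lra. Qed.
Lemma Cmod_snd a b : Rabs b <= Cmod (a,b).
Proof. pose proof (Rmax_Cmod (a,b)) as HH. simpl in HH. pose proof (Rmax_r (Rabs a) (Rabs b)). lra. Qed.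

Lemma Cexp_small eps : 0 < eps -> exists d, 0 < d /\ forall u v, Cmod (u,v) < d ->
  Cmod (exp u * cos v - 1 - u, exp u * sin v - v) <= eps * Cmod (u,v).
Proof.
  intros heps. set (e' := Rmin 1 (eps / 18)).
  assert (he1 : e' <= 1) by apply Rmin_l.
  assert (he2 : e' <= eps / 18) by apply Rmin_r.
  assert (he0 : 0 < e') by (apply Rmin_pos; lra).
  assert (D1 : is_derive exp 0 1) by (auto_derive; auto; rewrite exp_0; ring).
  assert (D2 : is_derive cos 0 0) by (auto_derive; auto; rewrite sin_0; ring).
  assert (D3 : is_derive sin 0 1) by (auto_derive; auto; rewrite cos_0; ring).
  destruct (deriv_small _ _ D1 e' he0) as [d1 [hd1 H1]].
  destruct (deriv_small _ _ D2 e' he0) as [d2 [hd2 H2]].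
  destruct (deriv_small _ _ D3 e' he0) as [d3 [hd3 H3]].
  rewrite exp_0 in H1. rewrite cos_0 in H2. rewrite sin_0 in H3.
  exists (Rmin (Rmin 1 e') (Rmin d1 (Rmin d2 d3))). split.
  { repeat apply Rmin_pos; lra. }
  intros u v hr. set (r := Cmod (u,v)) in *.
  pose proof (Cmod_fst u v) as hu. pose proof (Cmod_snd u v) as hv. fold r in hu, hv.
  pose proof (Rmin_l (Rmin 1 e') (Rmin d1 (Rmin d2 d3))).
  pose proof (Rmin_r (Rmin 1 e') (Rmin d1 (Rmin d2 d3))).
  pose proof (Rmin_l 1 e'). pose proof (Rmin_r 1 e').
  pose proof (Rmin_l d1 (Rmin d2 d3)). pose proof (Rmin_r d1 (Rmin d2 d3)).
  pose proof (Rmin_l d2 d3). pose proof (Rmin_r d2 d3).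
  specialize (H1 u ltac:(lra)). specialize (H2 v ltac:(lra)). specialize (H3 v ltac:(lra)).
  rewrite Rmult_0_l, Rminus_0_r in H2. rewrite Rmult_1_l in H1, H3. rewrite Rminus_0_r in H3.
  assert (hexp : exp u <= 3).
  { pose proof exp_le_3. assert (hu1 : u < 1) by (pose proof (Rle_abs u); lra).
    pose proof (exp_increasing u 1 hu1). lra. }
  pose proof (exp_pos u).
  assert (c1 : Rabs (exp u * cos v - 1 - u) <= 4 * e' * r).
  { replace (exp u * cos v - 1 - u) with ((exp u - 1 - u) + exp u * (cos v - 1)) by ring.
    eapply Rle_trans. apply Rabs_triang. rewrite Rabs_mult, (Rabs_right (exp u)) by lra.
    assert (e' * Rabs u <= e' * r) by (apply Rmult_le_compat_l; lra).
    assert (e' * Rabs v <= e' * r) by (apply Rmult_le_compat_l; lra).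
    assert (exp u * Rabs (cos v - 1) <= 3 * (e' * r)).
    { apply Rmult_le_compat; try lra; apply Rabs_pos. }
    lra. }
  assert (c2 : Rabs (exp u * sin v - v) <= 5 * e' * r).
  { replace (exp u * sin v - v) with ((exp u - 1) * sin v + (sin v - v)) by ring.
    eapply Rle_trans. apply Rabs_triang. rewrite Rabs_mult.
    assert (a1 : Rabs (exp u - 1) <= 2 * r).
    { replace (exp u - 1) with ((exp u - 1 - u) + u) by ring.
      eapply Rle_trans. apply Rabs_triang.
      assert (e' * Rabs u <= 1 * r) by (apply Rmult_le_compat; try lra; apply Rabs_pos). lra. }
    assert (a2 : Rabs (sin v) <= 2 * r).
    { replace (sin v) with ((sin v - v) + v) by ring.
      eapply Rle_trans. apply Rabs_triang.
      assert (e' * Rabs v <= 1 * r) by (apply Rmult_le_compat; try lra; apply Rabs_pos). lra. }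
    assert (Rabs (exp u - 1) * Rabs (sin v) <= (2 * r) * (2 * r)).
    { apply Rmult_le_compat; try apply Rabs_pos; lra. }
    assert (r * r <= e' * r) by (apply Rmult_le_compat_r; [apply Cmod_ge_0 | lra]).
    assert (e' * Rabs v <= e' * r) by (apply Rmult_le_compat_l; lra).
    lra. }
  eapply Rle_trans. apply Cmod_le_sum.
  assert (0 <= r) by apply Cmod_ge_0.
  assert (9 * e' * r <= eps * r) by (apply Rmult_le_compat_r; lra).
  lra.
Qed.

Lemma is_derive_Cexp0 : @is_derive C_AbsRing C_NormedModule Cexp (RtoC 0) (RtoC 1).
Proof.
  unfold is_derive, filterdiff. split. apply is_linear_scal_l.
  intros x hx. apply (is_filter_lim_locally_unique (K:=C_AbsRing) (V:=AbsRing_NormedModule C_AbsRing)) in hx. subst x.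
  intros eps.
  destruct (Cexp_small eps (cond_pos eps)) as [d [hd0 hd]].
  exists (mkposreal d hd0). intros y hy. change (Cmod (minus y (RtoC 0)) < d) in hy.
  simpl. change (Cmod (minus (minus (Cexp y) (Cexp (RtoC 0))) (scal (minus y (RtoC 0)) (RtoC 1))) <= eps * Cmod (minus y (RtoC 0))).
   destruct y as [u v].
  assert (E1 : minus ((u,v):C) (RtoC 0) = (u,v)).
  { apply injective_projections; simpl; unfold minus, plus, opp; simpl; ring. }
  match goal with |- Cmod ?A <= _ * Cmod ?B => 
    assert (E2 : A = (exp u * cos v - 1 - u, exp u * sin v - v));
    [| assert (E3 : B = (u,v))] end.
  { unfold Cexp. apply injective_projections; simpl; unfold minus, plus, opp, scal, mult; simpl;
    rewrite ?exp_0, ?cos_0, ?sin_0; ring. }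
  { apply injective_projections; simpl; unfold minus, plus, opp; simpl; ring. }
  rewrite E2, E3. apply hd. rewrite <- E3. exact hy.
Qed.

Lemma Cexp_add z h : Cexp (z + h)%C = (Cexp z * Cexp h)%C.
Proof.
  destruct z as [a b], h as [c d]. unfold Cexp. simpl.
  rewrite exp_plus, cos_plus, sin_plus.
  apply injective_projections; simpl; ring.
Qed.

Lemma deriv_C (f : C -> C) z l :
  (forall eps, 0 < eps -> exists d, 0 < d /\ forall h, Cmod h < d ->
     Cmod (f (z + h) - f z - h * l)%C <= eps * Cmod h) ->
  @is_derive C_AbsRing C_NormedModule f z l.
Proof.
  intros hf.
  unfold is_derive, filterdiff. split. apply is_linear_scal_l.
  intros x hx. apply (is_filter_lim_locally_unique (K:=C_AbsRing) (V:=AbsRing_NormedModule C_AbsRing)) in hx. subst x.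
  intros eps.
  destruct (hf eps (cond_pos eps)) as [d [hd0 hd]].
  exists (mkposreal d hd0). intros y hy. change (Cmod (minus y z) < d) in hy.
  simpl. change (Cmod (minus (minus (f y) (f z)) (scal (minus y z) l)) <= eps * Cmod (minus y z)).
  specialize (hd (minus y z) hy).
  replace (z + minus y z)%C with y in hd.
  exact hd.
  destruct y, z; apply injective_projections; simpl; unfold minus, plus, opp; simpl; ring.
Qed.

Lemma Cexp_minus1 (h : C) : (Cexp h - 1 - h)%C = (exp (fst h) * cos (snd h) - 1 - fst h, exp (fst h) * sin (snd h) - snd h).
Proof. destruct h as [u v]. unfold Cexp. apply injective_projections; simpl; ring. Qed.

Lemma is_derive_fB z : @is_derive C_AbsRing C_NormedModule fB z (fprime z).
Proof.
  apply deriv_C. intros eps heps.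
  set (M := Cmod (fprime z)).
  assert (hM : 0 <= M) by apply Cmod_ge_0.
  destruct (Cexp_small (eps / (M + 1))) as [d [hd0 hd]].
  { apply Rdiv_lt_0_compat; lra. }
  exists d. split; auto. intros h hh.
  replace (fB (z + h) - fB z - h * fprime z)%C with (fprime z * (Cexp h - 1 - h))%C.
  2:{ unfold fB, fprime. rewrite Cexp_add. ring. }
  rewrite Cmod_mult. fold M. rewrite Cexp_minus1.
  destruct h as [u v]. simpl.
  specialize (hd u v hh).
  assert (M * Cmod (exp u * cos v - 1 - u, exp u * sin v - v) <= M * (eps / (M + 1) * Cmod (u, v))).
  { apply Rmult_le_compat_l; auto. }
  assert (M * (eps / (M + 1) * Cmod (u, v)) <= eps * Cmod (u,v)).
  { pose proof (Cmod_ge_0 (u,v)).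
    replace (M * (eps / (M + 1) * Cmod (u, v))) with ((M / (M + 1)) * (eps * Cmod (u,v))) by (field; lra).
    assert (M / (M + 1) <= 1) by (apply Rmult_le_reg_r with (M + 1); [lra|]; unfold Rdiv; rewrite Rmult_assoc, Rinv_l; lra).
    assert (0 <= eps * Cmod (u,v)) by (apply Rmult_le_pos; lra).
    nra. }
  lra.
Qed.

Theorem theorem10p7 :
  (forall z : C, stripU z -> is_derive fB z (fprime z)) /\
  (forall p : R * R, Omega_f p) /\
  (forall lam : R * R -> C, burgers_sol (fun _ => True) lam ->
     forall x y : R,
       let w0 := (RtoC y - lam (x, y) * RtoC x)%C in
       let J := (RtoC 1 + fprime w0 * RtoC x)%C in
       1 <= Cmod J /\ (Cmod J = 1 <-> x = 0)).
Proof.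
  split; [| split].
  - intros z _. apply is_derive_fB.
  - intros p. exists (fun _ => True). split; [| exact I].
    split; [apply open_true | split].
    + exists lam0. split.
      * exists gx, gy. intros [x y] _. simpl.
        split; [apply dx_lam | split; [apply dy_lam | split; [apply cont_gx | apply cont_gy]]].
      * intros x y _. apply lam0_sol.
    + intros l1 l2 [_ h1] [_ h2] [x y] _.
      destruct (h1 x y I) as [_ [s1 e1]]. destruct (h2 x y I) as [_ [s2 e2]].
      destruct (sol_unique _ _ _ s1 e1) as [u1 _]. destruct (sol_unique _ _ _ s2 e2) as [u2 _].
      congruence.
  - intros lam [_ hs] x y w0 J.
    destruct (hs x y I) as [him [hst heq]].
    destruct (sol_unique _ _ _ hst heq) as [_ [hR hI]].
    destruct (H_spec (x * exp y)) as [hS _].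
    pose proof (Xi_ge0 _ hS) as hX.
    assert (hJ : J = (1 + fst (lam (x, y)) * x, snd (lam (x, y)) * x)).
    { unfold J, w0. replace (fprime (RtoC y - lam (x, y) * RtoC x)%C) with (lam (x, y)) by exact heq.
      destruct (lam (x, y)) as [a b]. apply injective_projections; simpl; ring. }
    pose proof (Cmod2_alt J) as hc.
    assert (hre : Re J = 1 + Xi (H (x * exp y))) by (rewrite hJ; unfold Re; simpl; rewrite hR; reflexivity).
    assert (him2 : Im J = H (x * exp y)) by (rewrite hJ; unfold Im; simpl; rewrite hI; reflexivity).
    rewrite hre, him2 in hc.
    pose proof (Cmod_ge_0 J) as hcm.
    assert (hge : 1 <= Cmod J) by nra.
    split; auto. split.
    + intros h1. rewrite h1 in hc.
      assert (hz : H (x * exp y) = 0) by nra.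
      unfold Im in him. rewrite hz in hI.
      destruct (Req_dec x 0) as [hx|hx]; auto.
      exfalso. apply Rmult_integral in hI. destruct hI; lra.
    + intros ->. rewrite Rmult_0_r in hI, hR. rewrite <- hR in hc. rewrite <- hI in hc. nra.
Qed.
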